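(* Let $P,Q$ be probability measures on $(\mathcal{X},\mathcal{A})$, $\lambda=\mathrm{TV}(P,Q)$, $\rho:\mathcal{X}\to I\subseteq\mathbb{R}$ measurable, and $\alpha\in(0,1)$. Let $Q_{m,n,\alpha}:J_{m,n}\times[0,1]\to\mathbb{R}$ be a bounding function at level $\alpha$ (respectively an asymptotic bounding function at level $\alpha$) for the counting process $(V_{m,z})_{z\in J_{m,n}}$ built from $\rho$, and define $$\hat\lambda^{\rho}=\inf\Big\{\tilde\lambda\in[0,1]:\ \sup_{z\in J_{m,n}}\big[V_{m,z}-Q_{m,n,\alpha}(z,\tilde\lambda)\big]\le0\Big\}.$$ Then $\mathbb{P}(\hat\lambda^{\rho}>\lambda)\le\alpha$ (respectively $\limsup_{N\to\infty}\mathbb{P}(\hat\lambda^{\rho}>\lambda)\le\alpha$).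
   Context: For each $N$: deterministic positive integers $m,n$ with $N=m+n$, $m\le n$, $m/N\to\pi\in(0,1)$; independent samples $X_1,\dots,X_m$ i.i.d. $\sim P$ and $Y_1,\dots,Y_n$ i.i.d. $\sim Q$. Let $\rho_{(1)}\le\dots\le\rho_{(N)}$ be the order statistics of the combined values $\rho(X_1),\dots,\rho(X_m),\rho(Y_1),\dots,\rho(Y_n)$, $J_{m,n}=\{1,\dots,N-1\}$, and $V_{m,z}=\#\{i\le m:\rho(X_i)\le\rho_{(z)}\}$. A function $Q_{m,n,\alpha}$ on $J_{m,n}\times[0,1]$ is a bounding function at level $\alpha$ if $\mathbb{P}\big(\sup_{z\in J_{m,n}}[V_{m,z}-Q_{m,n,\alpha}(z,\lambda)]>0\big)\le\alpha$ with $\lambda=\mathrm{TV}(P,Q)$ the true total variation distance; it is an asymptotic bounding function at level $\alpha$ if instead $\limsup_{N\to\infty}\mathbb{P}\big(\sup_{z\in J_{m,n}}[V_{m,z}-Q_{m,n,\alpha}(z,\lambda)]>0\big)\le\alpha$. *)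

(* Defs.v *)
From HB Require Import structures.
From mathcomp Require Import all_boot all_order all_algebra.
From mathcomp Require Import all_classical all_reals all_analysis.
Set Implicit Arguments. Unset Strict Implicit. Unset Printing Implicit Defensive.
Import Order.TTheory GRing.Theory Num.Theory.
Local Open Scope classical_set_scope.
Local Open Scope ring_scope.

Definition TV (R : realType) (d : measure_display) (T : measurableType d)
  (P Q : probability T R) : R :=
  sup [set `|fine (P A) - fine (Q A)| | A in [set A : set T | measurable A]].

Definition mutually_independent (R : realType) (d d' : measure_display)
  (Om : measurableType d) (T : measurableType d') (Pr : probability Om R)
  (K : finType) (Z : K -> Om -> T) : Prop :=
  forall B : K -> set T, (forall k, measurable (B k)) ->
    fine (Pr (\bigcap_(k in [set: K]) (Z k @^-1` B k)))
    = \prod_(k : K) fine (Pr (Z k @^-1` B k)).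

Definition sumfam (A : Type) (m n : nat) (x : 'I_m -> A) (y : 'I_n -> A)
  (k : 'I_m + 'I_n) : A :=
  match k with inl i => x i | inr j => y j end.

(* z-th order statistic rho_(z) (1-indexed) of the combined values *)
Definition ostat (R : realType) (m n : nat) (x : 'I_m -> R) (y : 'I_n -> R)
  (z : nat) : R :=
  nth 0 (sort <=%R ([seq x i | i <- enum 'I_m] ++ [seq y j | j <- enum 'I_n])) z.-1.

Definition Vcount (R : realType) (m n : nat) (x : 'I_m -> R) (y : 'I_n -> R)
  (z : nat) : nat := #|[set i : 'I_m | x i <= ostat x y z]|.

(* sup_{z in J_{m,n}} [V_{m,z} - Qb(z,lam)] > 0, J_{m,n} = {1,...,N-1} *)
Definition exceeds (R : realType) (m n : nat) (Qb : nat -> R -> R)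
  (x : 'I_m -> R) (y : 'I_n -> R) (lam : R) : Prop :=
  exists z : nat, (1 <= z <= (m + n).-1)%N /\ 0 < (Vcount x y z)%:R - Qb z lam.

(* lambda-hat = inf { l in [0,1] : sup_z [V_{m,z} - Qb(z,l)] <= 0 }
   as an extended real (inf of the empty set is +oo) *)
Definition lamhat (R : realType) (m n : nat) (Qb : nat -> R -> R)
  (x : 'I_m -> R) (y : 'I_n -> R) : \bar R :=
  ereal_inf [set l%:E | l in [set l : R | 0 <= l <= 1 /\ ~ exceeds Qb x y l]].

(* Main.v *)
Require Import Defs.
From HB Require Import structures.
From mathcomp Require Import all_boot all_order all_algebra.
From mathcomp Require Import all_classical all_reals all_analysis.
From mathcomp Require Import lra.
Import Order.TTheory GRing.Theory Num.Theory numFieldNormedType.Exports.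
Local Open Scope classical_set_scope.
Local Open Scope ring_scope.
Set Implicit Arguments. Unset Strict Implicit.

Lemma limn_esup_le (R : realType) (u v : (\bar R)^nat) :
  (forall n, (u n <= v n)%E) -> (limn_esup u <= limn_esup v)%E.
Proof.
move=> uv; rewrite !limn_esup_lim; apply: lee_lim;
  [exact: is_cvg_esups|exact: is_cvg_esups|].
apply: nearW => n; rewrite /esups /=.
apply: ge_ereal_sup => _ [k /= kn <-]; apply: le_trans (uv k) _.
by apply: ereal_sup_ubound; exists k.
Qed.

Lemma sorted_nth_lt (R : realType) (t : seq R) (a : R) z :
  sorted <=%R t -> (z < size t)%N ->
  (nth 0 t z < a) = (z < count (fun u : R => (u < a)%R) t)%N.
Proof.
elim: t z => [|x t IH] z //= st zs.
have st' : sorted <=%R t by move: st; case: t {IH zs} => //= y t /andP[].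
have all_ge : all (fun u => x <= u) t.
  by move: st; rewrite (path_sortedE (@le_trans _ _)) => /andP[].
case: z zs => [|z] zs /=.
  case: ltP => xa //=.
  rewrite add0n; apply/esym/negbTE; rewrite -leqNgt leqn0 -/(nilp _).
  rewrite eqn0Ngt -has_count; apply/hasPn => u ut; rewrite -leNgt.
  by apply: le_trans xa _; move/allP: all_ge; apply.
rewrite IH //; case: ltP => xa //=.
have -> : count (fun u : R => (u < a)%R) t = 0%N.
  apply/eqP; rewrite -leqn0 leqNgt -has_count; apply/hasPn => u ut; rewrite -leNgt.
  by apply: le_trans xa _; move/allP: all_ge; apply.
by [].
Qed.

Lemma le_ostat_count (R : realType) (s : seq R) (a : R) z :
  (1 <= z <= size s)%N ->
  (a <= nth 0 (sort <=%R s) z.-1) = (count (fun u : R => (u < a)%R) s < z)%N.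
Proof.
move=> /andP[z1 zs].
have ss : sorted <=%R (sort <=%R s) by apply: sort_sorted; exact: le_total.
rewrite leNgt sorted_nth_lt //; last by rewrite size_sort; case: z z1 zs.
rewrite (permP (permEl (perm_sort _ _))) -leqNgt.
by case: z z1 zs.
Qed.

Section Pattern.
Variable R : realType.

Definition cmp m n (x : 'I_m -> R) (y : 'I_n -> R)
  : {ffun ('I_m + 'I_n) * ('I_m + 'I_n) -> bool} :=
  [ffun p => (sumfam x y p.1 < sumfam x y p.2)%R].

Definition HV m n (b : {ffun ('I_m + 'I_n) * ('I_m + 'I_n) -> bool}) (z : nat) : nat :=
  #|[set i : 'I_m | (count (fun j => b (inl j, inl i)) (enum 'I_m)
       + count (fun j => b (inr j, inl i)) (enum 'I_n) < z)%N]|.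

Lemma Vcount_cmp m n (x : 'I_m -> R) (y : 'I_n -> R) z :
  (1 <= z <= m + n)%N -> Vcount x y z = HV (cmp x y) z.
Proof.
move=> hz; rewrite /Vcount /HV /ostat; congr (card (mem _)); apply/funext => i /=.
rewrite le_ostat_count; last by rewrite size_cat !size_map -!enumT !size_enum_ord.
rewrite count_cat !count_map; congr (_ + _ < z)%N; apply: eq_count => j;
  by rewrite /= ffunE.
Qed.

Definition Ex m n (b : {ffun ('I_m + 'I_n) * ('I_m + 'I_n) -> bool})
  (Qb : nat -> R -> R) (lam : R) : Prop :=
  exists z : nat, (1 <= z <= (m + n).-1)%N /\ (0 < (HV b z)%:R - Qb z lam)%R.

Definition LH m n (b : {ffun ('I_m + 'I_n) * ('I_m + 'I_n) -> bool})
  (Qb : nat -> R -> R) : \bar R :=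
  ereal_inf [set l%:E | l in [set l : R | (0 <= l <= 1)%R /\ ~ Ex b Qb l]].

Lemma exceeds_cmp m n Qb (x : 'I_m -> R) (y : 'I_n -> R) lam :
  exceeds Qb x y lam = Ex (cmp x y) Qb lam.
Proof.
apply/propext; split=> -[z [hz h]]; exists z; split => //.
  rewrite -Vcount_cmp //; move/andP: hz => [-> /leq_trans]; apply; exact: leq_pred.
rewrite Vcount_cmp //; move/andP: hz => [-> /leq_trans]; apply; exact: leq_pred.
Qed.

Lemma lamhat_cmp m n Qb (x : 'I_m -> R) (y : 'I_n -> R) :
  lamhat Qb x y = LH (cmp x y) Qb.
Proof.
rewrite /lamhat /LH; congr ereal_inf; congr image; apply/funext => l.
by rewrite /= exceeds_cmp.
Qed.

End Pattern.

Lemma meas_pattern (R : realType) (d d' : measure_display)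
  (T : measurableType d) (Om : measurableType d') (rho : T -> R) m n
  (X : 'I_m -> Om -> T) (Y : 'I_n -> Om -> T)
  (G : {ffun ('I_m + 'I_n) * ('I_m + 'I_n) -> bool} -> Prop) :
  measurable_fun setT rho ->
  (forall i, measurable_fun setT (X i)) ->
  (forall j, measurable_fun setT (Y j)) ->
  measurable [set w | G (cmp (fun i => rho (X i w)) (fun j => rho (Y j w)))].
Proof.
move=> mrho mX mY.
set c := fun w => cmp (fun i => rho (X i w)) (fun j => rho (Y j w)).
have -> : [set w | G (c w)] = \bigcup_(b in G) [set w | c w = b].
  apply/seteqP; split => [w Gw|w [b Gb cb]]; first by exists (c w).
  by rewrite /= cb.
apply: fin_bigcup_measurable; first exact: finite_finset.
move=> b _.
have -> : [set w | c w = b] =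
    \bigcap_(p in [set: ('I_m + 'I_n) * ('I_m + 'I_n)])
       [set w | (sumfam (fun i => rho (X i w)) (fun j => rho (Y j w)) p.1 <
                sumfam (fun i => rho (X i w)) (fun j => rho (Y j w)) p.2)%R = b p].
  apply/seteqP; split => [w <- p _|w h] /=; first by rewrite /c ffunE.
  by apply/ffunP => p; rewrite /c ffunE; exact: h.
apply: fin_bigcap_measurable; first exact: finite_finset.
move=> p _.
have mk : forall k, measurable_fun setT
    (fun w => sumfam (fun i => rho (X i w)) (fun j => rho (Y j w)) k).
  by case=> [i|j] /=; apply: measurableT_comp.
have := measurable_realfun.measurable_fun_ltr (mk p.1) (mk p.2) measurableT (Y := [set b p]) I.
by rewrite setTI.
Qed.

Lemma TV_01 (R : realType) (d : measure_display) (T : measurableType d)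
  (P Q : probability T R) : (0 <= TV P Q <= 1)%R.
Proof.
have bnd : forall (Pr : probability T R) A, measurable A ->
    (0 <= fine (Pr A) <= 1)%R.
  move=> Pr A mA; have h0 := measure_ge0 Pr A; have h1 := probability_le1 Pr mA.
  have fA : Pr A \is a fin_num by apply: fin_num_measure.
  by rewrite -!lee_fin fineK ?h0 ?h1.
have ub : ubound [set `|fine (P A) - fine (Q A)| | A in [set A : set T | measurable A]] 1%R.
  move=> _ [A mA <-]; move: (bnd P A mA) (bnd Q A mA) => /andP[p0 p1] /andP[q0 q1].
  rewrite ler_norml; apply/andP; split; lra.
apply/andP; split.
  apply: (@le_trans _ _ `|fine (P set0) - fine (Q set0)|%R) => //.
  apply: ub_le_sup; first by exists 1%R.
  by exists set0 => //; exact: measurable0.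
apply: ge_sup => //; exists `|fine (P set0) - fine (Q set0)|%R; by exists set0 => //; exact: measurable0.
Qed.

Lemma lamhat_sub (R : realType) m n (Qb : nat -> R -> R) (x : 'I_m -> R) (y : 'I_n -> R) t :
  (0 <= t <= 1)%R -> (t%:E < lamhat Qb x y)%E -> exceeds Qb x y t.
Proof.
move=> t01 h; case: (pselect (exceeds Qb x y t)) => // ne; exfalso.
have : (lamhat Qb x y <= t%:E)%E by apply: ereal_inf_lbound; exists t.
by rewrite leNgt h.
Qed.

Theorem proposition6 (R : realType) (d d' : measure_display)
  (T : measurableType d) (P Q : probability T R)
  (rho : T -> R) (alpha : R) :
  measurable_fun setT rho -> 0 < alpha < 1 ->
  (* non-asymptotic version *)
  (forall (Om : measurableType d') (Pr : probability Om R) (m n : nat)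
     (X : 'I_m -> Om -> T) (Y : 'I_n -> Om -> T) (Qb : nat -> R -> R),
     (0 < m)%N -> (m <= n)%N ->
     (forall i, measurable_fun setT (X i)) ->
     (forall j, measurable_fun setT (Y j)) ->
     (forall i A, measurable A -> Pr (X i @^-1` A) = P A) ->
     (forall j A, measurable A -> Pr (Y j @^-1` A) = Q A) ->
     mutually_independent Pr (sumfam X Y) ->
     (Pr [set w | exceeds Qb (fun i => rho (X i w)) (fun j => rho (Y j w))
                   (TV P Q)] <= alpha%:E)%E ->
     (Pr [set w | lamhat Qb (fun i => rho (X i w)) (fun j => rho (Y j w))
                   > (TV P Q)%:E] <= alpha%:E)%E)
  /\
  (* asymptotic version *)
  (forall (Om : nat -> measurableType d') (Pr : forall N, probability (Om N) R)
     (m n : nat -> nat) (pi : R)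
     (X : forall N, 'I_(m N) -> Om N -> T) (Y : forall N, 'I_(n N) -> Om N -> T)
     (Qb : nat -> nat -> R -> R),
     (forall N, (2 <= N)%N -> [/\ m N + n N = N, (0 < m N)%N & (m N <= n N)%N]) ->
     0 < pi < 1 ->
     ((fun N => (m N)%:R / N%:R : R) @ \oo --> pi)%classic ->
     (forall N i, measurable_fun setT (X N i)) ->
     (forall N j, measurable_fun setT (Y N j)) ->
     (forall N i A, measurable A -> Pr N (X N i @^-1` A) = P A) ->
     (forall N j A, measurable A -> Pr N (Y N j @^-1` A) = Q A) ->
     (forall N, mutually_independent (Pr N) (sumfam (X N) (Y N))) ->
     (limn_esup (fun N => Pr N [set w | exceeds (Qb N)
          (fun i => rho (X N i w)) (fun j => rho (Y N j w)) (TV P Q)])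
        <= alpha%:E)%E ->
     (limn_esup (fun N => Pr N [set w | lamhat (Qb N)
          (fun i => rho (X N i w)) (fun j => rho (Y N j w)) > (TV P Q)%:E])
        <= alpha%:E)%E).
Proof.
move=> mrho _.
have key : forall (Om : measurableType d') (Pr : probability Om R) (m n : nat)
     (X : 'I_m -> Om -> T) (Y : 'I_n -> Om -> T) (Qb : nat -> R -> R),
     (forall i, measurable_fun setT (X i)) ->
     (forall j, measurable_fun setT (Y j)) ->
     (Pr [set w | lamhat Qb (fun i => rho (X i w)) (fun j => rho (Y j w))
                   > (TV P Q)%:E] <=
      Pr [set w | exceeds Qb (fun i => rho (X i w)) (fun j => rho (Y j w))
                   (TV P Q)])%E.
  move=> Om Pr m n X Y Qb mX mY.
  apply: le_measure; rewrite ?inE.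
  - have -> : [set w | (TV P Q)%:E < lamhat Qb (fun i => rho (X i w)) (fun j => rho (Y j w))]%E
       = [set w | (TV P Q)%:E < LH (cmp (fun i => rho (X i w)) (fun j => rho (Y j w))) Qb]%E.
      by apply/funext => w; rewrite /= lamhat_cmp.
    exact: (@meas_pattern R d d' T Om rho m n X Y (fun b => (TV P Q)%:E < LH b Qb)%E mrho mX mY).
  - have -> : [set w | exceeds Qb (fun i => rho (X i w)) (fun j => rho (Y j w)) (TV P Q)]
       = [set w | Ex (cmp (fun i => rho (X i w)) (fun j => rho (Y j w))) Qb (TV P Q)].
      by apply/funext => w; rewrite /= exceeds_cmp.
    exact: (@meas_pattern R d d' T Om rho m n X Y (fun b => Ex b Qb (TV P Q)) mrho mX mY).
  - by move=> w /=; apply: lamhat_sub; exact: TV_01.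
split.
  move=> Om Pr m n X Y Qb _ _ mX mY _ _ _ h; apply: le_trans h; exact: key.
move=> Om Pr m n pi X Y Qb _ _ _ mX mY _ _ _ h; apply: le_trans h.
apply: limn_esup_le => N; exact: key.
Qed.
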